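(* Let $d\ge1$, $0<h<1$ with $2k/h\notin\mathbb Z$ for $k=1,\dots,d-1$. The number of candidate saddles in dimension $d$ (configurations on $\mathbb Z^d$) whose plus sites are contained in a fixed $d$-dimensional cube of side length $l\ge\ell_d$ is $$\mathcal N_d(l)=2^{d-1}\,d!\,(l-\ell_d+1)^d\prod_{k=1}^{d-1}(\ell_{k+1}-\ell_k+1)^k .$$
   Context: $\ell_k:=\lceil 2(k-1)/h\rceil$. A $d$-dimensional quasi-cube with maximal side $\ell$ is a box in $\mathbb Z^d$ all of whose sides have length $\ell-1$ or $\ell$. Attachment: given a box $l_1\times\cdots\times l_d$ and a $(d-1)$-dimensional configuration $\eta$ on $l_2\times\cdots\times l_d$, the configuration in which all sites of the box are $+1$, the sites $(l_1+1,i_2,\dots,i_d)$ with $\eta(i_2,\dots,i_d)=+1$ are $+1$, and all other sites are $-1$ — and every rotation and translation of it — is said to have $\eta$ attached to the box. Candidate saddles are defined recursively: in dimension $1$, a single $+1$ site with all other sites $-1$; in dimension $d$, configurations whose plus sites form a quasi-cube with one side of length $\ell_d-1$ and all other sides of length $\ell_d$, with a $(d-1)$-dimensional candidate saddle attached on one of its $(d-1)$-dimensional faces of size $\ell_d^{\,d-1}$. *)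

(* Defs.v *)
From HB Require Import structures.
From mathcomp Require Import all_boot all_order all_algebra all_fingroup.
From mathcomp Require Import boolp reals.
Set Implicit Arguments. Unset Strict Implicit. Unset Printing Implicit Defensive.
Import Order.TTheory GRing.Theory Num.Theory.
Local Open Scope ring_scope.

(* Points of Z^d and (plus-)sets of sites of Z^d.  A configuration
   sigma : Z^d -> {-1,+1} is identified with its set of plus sites. *)
Definition pt (d : nat) := {ffun 'I_d -> int}.
Definition zset (d : nat) := pt d -> Prop.

Definition zset_eq d (S T : zset d) := forall x, S x <-> T x.

Definition ell (R : realType) (h : R) (k : nat) : int :=
  Num.ceil ((k.-1)%:R *+ 2 / h).

(* Rotation + translation of Z^d: x |-> t + P x, where P is the signed
   permutation matrix (P x)_i = (-1)^(eps i) x_(s i); a rotation means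
   det P = +1, i.e. sign(s) * (-1)^#{i | eps i} = 1. *)
Definition rigid d (s : 'S_d) (eps : 'I_d -> bool) (t : pt d) (x : pt d) : pt d :=
  [ffun i => t i + (-1) ^+ eps i * x (s i)].

Definition proper_rot d (s : 'S_d) (eps : 'I_d -> bool) : bool :=
  odd_perm s == odd #|[set i | eps i]|.

Definition zimage d (f : pt d -> pt d) (T : zset d) : zset d :=
  fun y => exists x, T x /\ y = f x.

Definition phead d (x : pt d.+1) : int := x ord0.
Definition ptail d (x : pt d.+1) : pt d := [ffun i => x (lift ord0 i)].

(* Standard attachment shape in Z^(d+1) with maximal side L (side lengths are
   lattice lengths: a side of length m spans m+1 sites).  The quasi-cube
   [0, L-1] x [0, L]^d (one side L-1, the others L) is plus, and the
   d-dimensional configuration eta (living on the face [0,L]^d) is attached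
   on the layer {L} x Z^d adjacent to the face of size L^d. *)
Definition attach_shape d (L : int) (eta : zset d) : zset d.+1 :=
  fun x => ((0 <= phead x <= L - 1) /\ (forall i, 0 <= ptail x i <= L))
           \/ (phead x = L /\ eta (ptail x)).

Definition in_face d (L : int) (eta : zset d) : Prop :=
  forall y, eta y -> forall i, 0 <= y i <= L.

(* csaddle h d S : S is a candidate saddle in dimension d+1 *)
Fixpoint csaddle (R : realType) (h : R) (d : nat) : zset d.+1 -> Prop :=
  match d as n return zset n.+1 -> Prop with
  | 0 => fun S => exists a : pt 1, zset_eq S (fun x => x = a)
  | d'.+1 => fun S =>
      exists (eta : zset d'.+1),
        csaddle h eta /\ in_face (ell h d'.+2) eta /\
        exists (s : 'S_d'.+2) (eps : 'I_d'.+2 -> bool) (t : pt d'.+2),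
          proper_rot s eps /\
          zset_eq S (zimage (rigid s eps t) (attach_shape (ell h d'.+2) eta))
  end.

Definition candidate_saddle (R : realType) (h : R) (d : nat) : zset d -> Prop :=
  match d as n return zset n -> Prop with
  | 0 => fun _ => False
  | d'.+1 => @csaddle R h d'
  end.

(* The fixed cube [0, l]^d (side length l, i.e. l+1 sites per side) *)
Definition cube_pt (d l : nat) := {ffun 'I_d -> 'I_l.+1}.

Definition embed d l (A : {set cube_pt d l}) : zset d :=
  fun x => exists a, a \in A /\ x = [ffun i => ((a i : nat) : int)].

Definition N_saddles (R : realType) (h : R) (d l : nat) : nat :=
  #|[set A : {set cube_pt d l} | `[< candidate_saddle h (embed A) >] ]|.

(* Main.v *)
Require Import Defs.
From HB Require Import structures.
From mathcomp Require Import all_boot all_order all_algebra all_fingroup.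
From mathcomp Require Import boolp reals.
From mathcomp Require Import zify ring lra.
Import Order.TTheory GRing.Theory Num.Theory.
Local Open Scope ring_scope.
Set Implicit Arguments. Unset Strict Implicit. Unset Printing Implicit Defensive.

Definition Ev (L : int) (c : bool) : int := if c then L else 0.
Definition cb (L : int) (b : bool) : int := if b then 0 else L.
Definition quasi (L : int) (b : bool) (v : int) : bool :=
  if b then (1 <= v <= L) else (0 <= v <= L - 1).

Definition canon n (L : int) (a : 'I_n.+1) (b : bool) (t : pt n.+1) (eta : zset n)
  : zset n.+1 :=
  fun x => (forall j, 0 <= x (lift a j) - t (lift a j) <= L) /\
    (quasi L b (x a - t a) \/
     (x a - t a = cb L b /\ eta [ffun j => x (lift a j) - t (lift a j)])).

Definition qmap n (p : 'I_n -> 'I_n) (e : 'I_n -> bool) (u : pt n) (z : pt n) : pt n :=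
  [ffun k => u k + (-1) ^+ e k * z (p k)].

Lemma sgK (b : bool) (x : int) : (-1) ^+ b * ((-1) ^+ b * x) = x.
Proof. by case: b => /=; ring. Qed.

Lemma Ev_box (L : int) (c : bool) (v : int) : 0 <= L -> (0 <= Ev L c + (-1) ^+ c * v <= L) = (0 <= v <= L).
Proof. rewrite /Ev; case: c => /= H; apply/idP/idP; lia. Qed.

Lemma axis_q (L : int) (b c : bool) (v : int) : quasi L b (Ev L c + (-1) ^+ c * v) = quasi L (b (+) c) v.
Proof. rewrite /Ev /quasi; case: c; case: b => /=; apply/idP/idP; lia. Qed.

Lemma axis_cb (L : int) (b c : bool) (v : int) : (Ev L c + (-1) ^+ c * v = cb L b) <-> (v = cb L (b (+) c)).
Proof. rewrite /Ev /cb; case: c; case: b => /=; split; lia. Qed.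

Lemma zeq_refl d (S : zset d) : zset_eq S S.
Proof. by []. Qed.
Lemma zeq_sym d (S T : zset d) : zset_eq S T -> zset_eq T S.
Proof. by move=> H x; split; move/H. Qed.
Lemma zeq_trans d (S T U : zset d) : zset_eq S T -> zset_eq T U -> zset_eq S U.
Proof. by move=> H1 H2 x; split; [move/H1/H2 | move/H2/H1]. Qed.

Lemma canon_eq n (L : int) (a : 'I_n.+1) (b : bool) (t : pt n.+1) (eta eta' : zset n) :
  zset_eq eta eta' -> zset_eq (canon L a b t eta) (canon L a b t eta').
Proof.
move=> H x; rewrite /canon; split=> -[H1 H2]; split=> //;
  (case: H2 => [|[H3 H4]]; [by left | right; split=> //; exact/H]).
Qed.

Lemma canon_q n (L : int) (a : 'I_n.+1) (b : bool) (t : pt n.+1) (eta : zset n)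
    (p : 'I_n.+1 -> 'I_n.+1) (e : 'I_n.+1 -> bool) (u t' : pt n.+1)
    (p' : 'I_n -> 'I_n) :
  0 <= L -> injective p' ->
  (forall j, p (lift a j) = lift (p a) (p' j)) ->
  (forall k, t' (p k) = (-1) ^+ e k * (Ev L (e k) - u k + t k)) ->
  zset_eq (fun z => canon L a b t eta (qmap p e u z))
    (canon L (p a) (b (+) e a) t'
       (fun w => eta (qmap p' (fun j => e (lift a j))
                        [ffun j => Ev L (e (lift a j))] w))).
Proof.
move=> hL injp' hp ht z.
have key k : qmap p e u z k - t k = Ev L (e k) + (-1) ^+ e k * (z (p k) - t' (p k)).
  rewrite /qmap ffunE ht /Ev; case: (e k) => /=; ring.
have face : [ffun j => qmap p e u z (lift a j) - t (lift a j)] =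
   qmap p' (fun j => e (lift a j)) [ffun j => Ev L (e (lift a j))]
        [ffun j => z (lift (p a) j) - t' (lift (p a) j)].
  by apply/ffunP => j; rewrite [LHS]ffunE key hp /qmap !ffunE.
have surj j' : exists j, p' j = j' by exists (invF injp' j'); rewrite f_invF.
rewrite /canon; cbv beta; rewrite face. rewrite key axis_q.
have box : (forall j, 0 <= qmap p e u z (lift a j) - t (lift a j) <= L) <->
           (forall j, 0 <= z (lift (p a) j) - t' (lift (p a) j) <= L).
  split=> H j.
  - have [j0 <-] := surj j; have := H j0; by rewrite key hp Ev_box.
  - by rewrite key hp Ev_box.
rewrite box axis_cb; tauto.
Qed.
Fixpoint C (R : realType) (h : R) (n : nat) : zset n.+1 -> Prop :=
  match n as m return zset m.+1 -> Prop with
  | 0 => fun S => exists a : pt 1, zset_eq S (fun x => x = a)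
  | m.+1 => fun S => exists (a : 'I_m.+2) (b : bool) (t : pt m.+2) (eta : zset m.+1),
      C h eta /\ in_face (ell h m.+2) eta /\ zset_eq S (canon (ell h m.+2) a b t eta)
  end.

Lemma ell_ge0 (R : realType) (h : R) k : 0 <= h -> 0 <= ell h k.
Proof.
move=> h0; rewrite /ell ceil_ge0; apply: (lt_le_trans (y := 0)); first by rewrite oppr_lt0.
by apply: divr_ge0 => //; rewrite mulrn_wge0.
Qed.

Lemma C_eq (R : realType) (h : R) n (S T : zset n.+1) :
  C h S -> zset_eq S T -> C h T.
Proof.
case: n S T => [|n] S T /=.
  by move=> [a Ha] H; exists a; apply: zeq_trans (zeq_sym H) Ha.
move=> [a [b [t [eta [H1 [H2 H3]]]]]] H; exists a, b, t, eta; split=> //; split=> //.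
exact: zeq_trans (zeq_sym H) H3.
Qed.

Lemma in_face_q n (L : int) (eta : zset n) (p' : 'I_n -> 'I_n) (e' : 'I_n -> bool) :
  0 <= L -> injective p' -> in_face L eta ->
  in_face L (fun w => eta (qmap p' e' [ffun j => Ev L (e' j)] w)).
Proof.
move=> hL injp H w Hw i.
have [k <-] : exists k, p' k = i by exists (invF injp i); rewrite f_invF.
by have := H _ Hw k; rewrite /qmap !ffunE Ev_box.
Qed.

Lemma C_pre (R : realType) (h : R) n (S : zset n.+1) (p : 'I_n.+1 -> 'I_n.+1)
    (e : 'I_n.+1 -> bool) (u : pt n.+1) :
  0 <= h -> injective p -> C h S -> C h (fun z => S (qmap p e u z)).
Proof.
move=> h0; elim: n S p e u => [|n IH] S p e u injp /=.
  move=> [a Ha].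
  exists [ffun i => (-1) ^+ e (invF injp i) * (a (invF injp i) - u (invF injp i))].
  move=> z; rewrite Ha; split=> [Hq|->].
  - apply/ffunP => i; have [k <-] : exists k, p k = i by exists (invF injp i); rewrite f_invF.
    rewrite ffunE invF_f -Hq /qmap ffunE; case: (e k) => /=; ring.
  - apply/ffunP => k; rewrite /qmap !ffunE invF_f; case: (e k) => /=; ring.
move=> [a [b [t [eta [Ceta [Hf Heq]]]]]].
have hL := ell_ge0 n.+2 h0.
pose t' := [ffun i => (-1) ^+ e (invF injp i) *
   (Ev (ell h n.+2) (e (invF injp i)) - u (invF injp i) + t (invF injp i))].
pose p' := fun j => odflt j (unlift (p a) (p (lift a j))).
have hp' j : p (lift a j) = lift (p a) (p' j).
  have neq : p a != p (lift a j) by rewrite (inj_eq injp) neq_lift.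
  by case: (unlift_some neq) => j0 E1 E2; rewrite /p' E2.
have injp' : injective p'.
  move=> j1 j2 E; apply: (@lift_inj _ a); apply: (injp).
  by rewrite !hp' E.
exists (p a), (b (+) e a), t'.
eexists; split; [|split].
- exact: (IH eta p' (fun j => e (lift a j)) [ffun j => Ev (ell h n.+2) (e (lift a j))] injp' Ceta).
- exact: in_face_q.
- apply: zeq_trans; last first.
    apply: (canon_q _ _ hL injp' hp').
    by move=> k; rewrite /t' ffunE invF_f.
  by move=> z; apply: Heq.
Qed.

Definition z0 n : pt n := [ffun _ => (0 : int)].

Lemma zimage_q n (s : 'S_n) (eps : 'I_n -> bool) (t : pt n) (T : zset n) :
  zset_eq (zimage (rigid s eps t) T)
    (fun z => T (qmap (fun k => (s^-1)%g k) (fun k => eps ((s^-1)%g k))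
                      [ffun k => - ((-1) ^+ eps ((s^-1)%g k) * t ((s^-1)%g k))] z)).
Proof.
move=> z; split.
- case=> x [Tx ->].
  suff -> : qmap (fun k => (s^-1)%g k) (fun k => eps ((s^-1)%g k))
      [ffun k => - ((-1) ^+ eps ((s^-1)%g k) * t ((s^-1)%g k))] (rigid s eps t x) = x by [].
  apply/ffunP => k; rewrite /qmap /rigid !ffunE permKV.
  by case: (eps _) => /=; ring.
- move=> Hq; eexists; split; first exact: Hq.
  apply/ffunP => i; rewrite /rigid /qmap !ffunE permK.
  by case: (eps _) => /=; ring.
Qed.

Lemma zimage_eq n (f : pt n -> pt n) (T T' : zset n) :
  zset_eq T T' -> zset_eq (zimage f T) (zimage f T').
Proof.
by move=> H z; split=> -[x [Tx ->]]; exists x; split=> //; apply/H.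
Qed.

Lemma attach_canon n (L : int) (eta : zset n) :
  in_face L eta -> zset_eq (attach_shape L eta) (canon L ord0 false (z0 n.+1) eta).
Proof.
move=> Hf x.
have tl : [ffun j => x (lift ord0 j) - z0 n.+1 (lift ord0 j)] = ptail x.
  by apply/ffunP => j; rewrite !ffunE subr0.
rewrite /attach_shape /canon tl /quasi /cb /phead /= !ffunE subr0.
split.
- case=> [[H1 H2]|[H1 H2]].
  + split; last by left.
    by move=> j; have := H2 j; rewrite /ptail !ffunE subr0.
  + split; last by right.
    by move=> j; have := Hf _ H2 j; rewrite /ptail !ffunE subr0.
- case=> H1 [H2|H2]; [left|by right].
  split=> // i; have := H1 i; by rewrite /ptail !ffunE subr0.
Qed.

Lemma qmapR n (L : int) (e : 'I_n -> bool) (w : pt n) :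
  qmap id e [ffun j => Ev L (e j)] (qmap id e [ffun j => Ev L (e j)] w) = w.
Proof. by apply/ffunP => j; rewrite /qmap !ffunE /Ev; case: (e j) => /=; ring. Qed.

Lemma csaddle_C (R : realType) (h : R) n (S : zset n.+1) :
  0 <= h -> csaddle h S -> C h S.
Proof.
move=> h0; elim: n S => [|n IH] S //=.
move=> [eta [Ceta [Hf [s [eps [t [_ Heq]]]]]]].
have CA : C h (attach_shape (ell h n.+2) eta).
  exists ord0, false, (z0 n.+2), eta; split; first exact: IH.
  by split=> //; apply: attach_canon.
have := C_pre (fun k => eps ((s^-1)%g k))
  [ffun k => - ((-1) ^+ eps ((s^-1)%g k) * t ((s^-1)%g k))] h0 (@perm_inj _ (s^-1)%g) CA.
move/C_eq; apply; apply: zeq_sym; apply: zeq_trans Heq _; exact: zimage_q.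
Qed.

Lemma C_csaddle (R : realType) (h : R) n (S : zset n.+1) :
  0 <= h -> C h S -> csaddle h S.
Proof.
move=> h0; elim: n S => [|n IH] S //=.
move=> [a [b [t [eta [Ceta [Hf Heq]]]]]].
set L := ell h n.+2.
have hL : 0 <= L := ell_ge0 _ h0.
pose sf := fun i : 'I_n.+2 => if unlift a i is Some j then lift ord0 j else ord0.
have injsf : injective sf.
  move=> i1 i2; rewrite /sf.
  case: unliftP => [j1 ->|->]; case: unliftP => [j2 ->|->] //.
  by move/lift_inj => ->.
pose s := perm injsf.
have sa : s a = ord0 by rewrite permE /sf unlift_none.
have sl j : s (lift a j) = lift ord0 j by rewrite permE /sf liftK.
have pa : (s^-1)%g ord0 = a by rewrite -sa permK.
have pl j : (s^-1)%g (lift ord0 j) = lift a j by rewrite -sl permK.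
pose c := odd_perm s (+) b.
pose eps := fun i : 'I_n.+2 => if unlift a i is Some j then (j == ord0) && c else b.
have epsa : eps a = b by rewrite /eps unlift_none.
have epsl j : eps (lift a j) = (j == ord0) && c by rewrite /eps liftK.
have prop : proper_rot s eps.
  rewrite /proper_rot.
  have -> : #|[set i | eps i]| = (b + c)%N.
    have na : a != lift a ord0 by rewrite neq_lift.
    have E : [set i | eps i] = [set i | ((i == a) && b) || ((i == lift a ord0) && c)].
      apply/setP => i; rewrite !inE /eps.
      case: unliftP => [j ->|->].
      - by rewrite [lift a j == a]eq_sym (negbTE (neq_lift a j)) (inj_eq (@lift_inj _ a)).
      - by rewrite eqxx (negbTE na) /= orbF.
    have gen : forall b' c' : bool,
        #|[set i | ((i == a) && b') || ((i == lift a ord0) && c')]| = (b' + c')%N.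
      move=> [] [] /=.
      - rewrite (_ : [set i | _] = [set a; lift a ord0]); first by rewrite cards2 na.
        by apply/setP => i; rewrite !inE !andbT.
      - rewrite (_ : [set i | _] = [set a]); first by rewrite cards1.
        by apply/setP => i; rewrite !inE !andbT andbF orbF.
      - rewrite (_ : [set i | _] = [set lift a ord0]); first by rewrite cards1.
        by apply/setP => i; rewrite !inE !andbT andbF.
      - rewrite (_ : [set i | _] = set0); first by rewrite cards0.
        by apply/setP => i; rewrite !inE !andbF.
    by rewrite E gen.
  by rewrite oddD /c; case: (odd_perm s); case: (b).
pose e'' := fun j : 'I_n.+1 => (j == ord0) && c.
pose eta' := fun w => eta (qmap id e'' [ffun j => Ev L (e'' j)] w).
have Ceta' : C h eta' by apply: C_pre => //; exact: inj_id.
have Hf' : in_face L eta' by apply: in_face_q => //; exact: inj_id.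
pose t0 := [ffun i => t i - (-1) ^+ eps i * Ev L (eps i)].
exists eta'; split; first exact: IH.
split=> //.
exists s, eps, t0; split=> //.
have CQ := @canon_q n.+1 L ord0 false (z0 n.+2) eta' (fun k => (s^-1)%g k)
   (fun k => eps ((s^-1)%g k))
   [ffun k => - ((-1) ^+ eps ((s^-1)%g k) * t0 ((s^-1)%g k))] t id hL (@inj_id _)
   (fun j => etrans (pl j) (congr1 (fun x => lift x j) (esym pa))).
have {}CQ : zset_eq
    (fun z => canon L ord0 false (z0 n.+2) eta' (qmap (fun k => (s^-1)%g k)
       (fun k => eps ((s^-1)%g k))
       [ffun k => - ((-1) ^+ eps ((s^-1)%g k) * t0 ((s^-1)%g k))] z))
    (canon L a b t (fun w => eta' (qmap id e'' [ffun j => Ev L (e'' j)] w))).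
  have H1 : forall k : 'I_n.+2, t ((s^-1)%g k) = (-1) ^+ eps ((s^-1)%g k) *
     (Ev L (eps ((s^-1)%g k)) -
      [ffun k => - ((-1) ^+ eps ((s^-1)%g k) * t0 ((s^-1)%g k))] k + z0 n.+2 k).
    move=> k; rewrite /t0 /z0 !ffunE; set i := (s^-1)%g k.
    by case: (eps i) => /=; ring.
  have := CQ H1; rewrite /= pa epsa /=.
  move=> H2; apply: (zeq_trans H2).
  apply: canon_eq => w; rewrite /eta'.
  suff -> : qmap id (fun j => eps ((s^-1)%g (lift ord0 j)))
      [ffun j => Ev L (eps ((s^-1)%g (lift ord0 j)))] w =
      qmap id e'' [ffun j => Ev L (e'' j)] w by [].
  by apply/ffunP => j; rewrite /qmap !ffunE pl epsl.
apply: (zeq_trans Heq).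
apply: zeq_trans (zeq_sym (zimage_eq _ (attach_canon Hf'))).
apply: zeq_trans (zeq_sym (zimage_q _ _ _ _)).
apply: zeq_trans (zeq_sym CQ).
apply: canon_eq => w; rewrite /eta' qmapR; by [].
Qed.

Lemma ell_step (R : realType) (h : R) (k : nat) : 0 < h -> h < 1 ->
  ell h k.+1 + 2 <= ell h k.+2.
Proof.
move=> h0 h1; rewrite /ell /=.
set x := k%:R *+ 2 / h; set y := k.+1%:R *+ 2 / h.
have hxy : x + 2 <= y.
  have -> : y = x + 2 / h by rewrite /x /y -mulrDl -natr1 mulrnDl.
  rewrite lerD2l ler_pdivlMr //; lra.
have : Num.ceil x <= Num.ceil y - 2.
  rewrite ceil_le_int rmorphB /=.
  apply: (le_trans (y := y - 2)); first lra.
  by rewrite lerD2r ceil_ge.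
lia.
Qed.

Lemma ell1 (R : realType) (h : R) : ell h 1 = 0.
Proof. by rewrite /ell /= mul0rn mul0r ceil0. Qed.

Definition mk n (t : pt n.+1) (a : 'I_n.+1) (ya : int) (w : pt n) : pt n.+1 :=
  [ffun i => t i + (if unlift a i is Some j then w j else ya)].

Lemma mk_a n (t : pt n.+1) (a : 'I_n.+1) (ya : int) (w : pt n) : mk t a ya w a - t a = ya.
Proof. rewrite /mk ffunE unlift_none; lia. Qed.

Lemma mk_l n (t : pt n.+1) (a : 'I_n.+1) (ya : int) (w : pt n) j :
  mk t a ya w (lift a j) - t (lift a j) = w j.
Proof. rewrite /mk ffunE liftK; lia. Qed.

Lemma tail_mk n (t : pt n.+1) (a : 'I_n.+1) (ya : int) (w : pt n) :
  [ffun j => mk t a ya w (lift a j) - t (lift a j)] = w.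
Proof. by apply/ffunP => j; rewrite ffunE mk_l. Qed.

Lemma canon_mk n (L : int) (a : 'I_n.+1) (b : bool) (t : pt n.+1) (eta : zset n)
   (ya : int) (w : pt n) :
  canon L a b t eta (mk t a ya w) <->
  (forall j, 0 <= w j <= L) /\ (quasi L b ya \/ (ya = cb L b /\ eta w)).
Proof.
rewrite /canon tail_mk mk_a; split=> -[H1 H2]; split=> // j.
- by have := H1 j; rewrite mk_l.
- by rewrite mk_l.
Qed.

Lemma mk_box n (L : int) (t : pt n.+1) (a : 'I_n.+1) (ya : int) (w : pt n) :
  0 <= ya <= L -> (forall k, 0 <= w k <= L) -> forall i, 0 <= mk t a ya w i - t i <= L.
Proof.
move=> Hy Hw i; case: (unliftP a i) => [j ->|->]; first by rewrite mk_l.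
by rewrite mk_a.
Qed.

Lemma canon_box n (L : int) (a : 'I_n.+1) (b : bool) (t : pt n.+1) (eta : zset n) z :
  0 <= L -> canon L a b t eta z -> forall i, 0 <= z i - t i <= L.
Proof.
move=> hL [H1 H2] i; case: (unliftP a i) => [j ->|->]; first exact: H1.
case: H2 => [|[-> _]]; rewrite /quasi /cb; case: b => /=; lia.
Qed.

Lemma quasi_cb (L : int) (b : bool) : 1 <= L -> quasi L b (cb L b) = false.
Proof. rewrite /quasi /cb; case: b => /= H; apply/negbTE; lia. Qed.

Lemma C_nonempty (R : realType) (h : R) n (S : zset n.+1) :
  0 <= h -> (forall k, ell h k.+1 + 2 <= ell h k.+2) -> C h S -> exists x, S x.
Proof.
move=> h0 hs; case: n S => [|n] S /=.
  by move=> [a Ha]; exists a; apply/Ha.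
move=> [a [b [t [eta [_ [_ Heq]]]]]].
have L2 : 2 <= ell h n.+2 by have := hs n; have := ell_ge0 n.+1 h0; lia.
exists (mk t a (if b then ell h n.+2 else 0) (z0 n.+1)); apply/Heq/canon_mk.
split; first by move=> j; rewrite ffunE; lia.
by left; rewrite /quasi; case: (b) => /=; lia.
Qed.

Lemma C_proj (R : realType) (h : R) n (S : zset n.+1) :
  0 <= h -> C h S -> forall j, exists m, forall w, S w -> m <= w j <= m + ell h n.+1.
Proof.
move=> h0; case: n S => [|n] S /=.
  move=> [a Ha] j; exists (a j) => w /Ha ->; rewrite ell1; lia.
move=> [a [b [t [eta [_ [_ Heq]]]]]] j; exists (t j) => w /Heq Hc.
have := canon_box (ell_ge0 n.+2 h0) Hc j; lia.
Qed.

Lemma wit n (L : int) (a : 'I_n.+1) (b : bool) (t : pt n.+1) (eta : zset n) :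
  1 <= L -> (exists w, eta w) -> in_face L eta -> forall i (v : int), (v = 0 \/ v = L) ->
  exists z, canon L a b t eta z /\ z i - t i = v.
Proof.
move=> hL [w0 Hw0] Hf i v Hv.
case: (unliftP a i) => [j ->|->].
  exists (mk t a (if b then L else 0) [ffun k => if k == j then v else 0]).
  rewrite mk_l ffunE eqxx; split=> //; apply/canon_mk; split.
    by move=> k; rewrite ffunE; case: (k == j); lia.
  by left; rewrite /quasi; case: (b) => /=; lia.
have Hb : forall k, 0 <= z0 n k <= L by move=> k; rewrite ffunE; lia.
case: Hv => ->; case: b.
- by exists (mk t a 0 w0); rewrite mk_a; split=> //; apply/canon_mk; split;
    [exact: Hf | right].
- by exists (mk t a 0 (z0 n)); rewrite mk_a; split=> //; apply/canon_mk; split;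
    [exact: Hb | left; rewrite /quasi /=; lia].
- by exists (mk t a L (z0 n)); rewrite mk_a; split=> //; apply/canon_mk; split;
    [exact: Hb | left; rewrite /quasi /=; lia].
- by exists (mk t a L w0); rewrite mk_a; split=> //; apply/canon_mk; split;
    [exact: Hf | right].
Qed.

Lemma val_choice (m l L c : int) : 0 <= l -> l + 2 <= L -> (c = 0 \/ c = L) ->
  exists v, 0 <= v <= L /\ v != c /\ (v < m \/ m + l < v).
Proof.
move=> hl hL hc.
case: (ltrP 1 m) => Hm; first by exists 1; split; [lia|split; [case: hc => ->; lia|lia]].
case: (ltrP m 1) => Hm2.
  by exists (L - 1); split; [lia|split; [case: hc => ->; lia|lia]].
have [->|Hc] := eqVneq c 0.
  by exists L; split; [lia|split; lia].
by exists 0; split; [lia|split; [by rewrite eq_sym|lia]].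
Qed.

Lemma canon_inj n (L l : int) (a a' : 'I_n.+2) (b b' : bool) (t t' : pt n.+2)
    (eta eta' : zset n.+1) :
  0 <= l -> l + 2 <= L ->
  (exists w, eta w) -> (exists w, eta' w) -> in_face L eta -> in_face L eta' ->
  (forall j, exists m, forall w, eta w -> m <= w j <= m + l) ->
  zset_eq (canon L a b t eta) (canon L a' b' t' eta') ->
  [/\ a = a', b = b', t = t' & zset_eq eta eta'].
Proof.
move=> hl hlL ne ne' Hf Hf' Hp H.
have hL : 0 <= L by lia.
have hL1 : 1 <= L by lia.
have tt : t = t'.
  apply/ffunP => i.
  have [z [Cz Ez]] := wit a b t hL1 ne Hf i (or_introl erefl).
  have A1 := canon_box hL (proj1 (H z) Cz) i.
  have [z' [Cz' Ez']] := wit a' b' t' hL1 ne' Hf' i (or_introl erefl).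
  have A2 := canon_box hL (proj2 (H z') Cz') i.
  have E1 : z i = t i by apply/eqP; rewrite -subr_eq0; apply/eqP.
  have E2 : z' i = t' i by apply/eqP; rewrite -subr_eq0; apply/eqP.
  rewrite E1 in A1; rewrite E2 in A2.
  move: A1 A2; rewrite !subr_ge0 => /andP[A1 _] /andP[A2 _].
  by apply/eqP; rewrite eq_le A1 A2.
subst t'.
have ab : a = a' /\ b = b'.
{   have [ea|na] := eqVneq a a'; first (have [eb|nb] := eqVneq b b'; first by []).
  all: exfalso.
  all: pose j0 := if unlift a a' is Some j then j else ord0.
  all: have [m Hm] := Hp j0.
  all: have [v [Hv1 [Hv2 Hv3]]] := val_choice m hl hlL
          (if b' as bb return (cb L bb = 0 \/ cb L bb = L) then or_introl erefl
           else or_intror erefl).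
  all: pose w := [ffun k => if k == j0 then v else 0].
  all: have nw : ~ eta w by move/Hm; rewrite ffunE eqxx; lia.
  all: have nz : ~ canon L a b t eta (mk t a (cb L b) w).
  all: try (move/canon_mk => [_ [|[_ //]]]; by rewrite quasi_cb).
  all: apply: nz; apply/H.
  all: have Hw : forall k, 0 <= w k <= L by move=> k; rewrite ffunE; case: (k == j0); lia.
  all: have Hbox := mk_box t a (if b as bb return 0 <= cb L bb <= L then
          ltac:(rewrite /cb /=; lia) else ltac:(rewrite /cb /=; lia)) Hw.
  - rewrite -ea; split; first by move=> j; apply: Hbox.
    left; rewrite mk_a; move: nb; rewrite /quasi /cb.
    by case: (b); case: (b') => //= _; lia.
  - have [j1 E1 E2] := unlift_some na.
    have ej : j0 = j1 by rewrite /j0 E2.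
    split; first by move=> j; apply: Hbox.
    left; rewrite E1 mk_l ffunE -ej eqxx.
    move: Hv2; rewrite /quasi /cb; case: (b') => /= Hv2; lia. }
case: ab => ea eb; subst a' b'; split=> // w.
split=> Hw.
- have : canon L a b t eta (mk t a (cb L b) w) by apply/canon_mk; split;
    [exact: Hf | right].
  move/H/canon_mk => [_ [|[_ //]]]; by rewrite quasi_cb.
- have : canon L a b t eta' (mk t a (cb L b) w) by apply/canon_mk; split;
    [exact: Hf' | right].
  move/H/canon_mk => [_ [|[_ //]]]; by rewrite quasi_cb.
Qed.

Definition toZ d l (x : cube_pt d l) : pt d := [ffun i => ((x i : nat) : int)].

Lemma toZ_inj d l : injective (@toZ d l).
Proof.
move=> x y E; apply/ffunP => i; apply: val_inj.
by have := congr1 (fun f : pt d => f i) E; rewrite !ffunE => -[].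
Qed.

Lemma embed_toZ d l (A : {set cube_pt d l}) x : embed A (toZ x) <-> x \in A.
Proof.
split; last by move=> Hx; exists x.
by move=> [y [Hy /toZ_inj ->]].
Qed.

Lemma embed_face d l (B : {set cube_pt d l}) : in_face l%:Z (embed B).
Proof.
move=> y [c [_ ->]] i; rewrite ffunE.
have := ltn_ord (c i); lia.
Qed.

Lemma ofZ d l (z : pt d) : (forall i, 0 <= z i <= l%:Z) -> exists x : cube_pt d l, toZ x = z.
Proof.
move=> H; exists [ffun i => inord (absz (z i))].
apply/ffunP => i; have /andP[H1 H2] := H i.
rewrite !ffunE inordK; first by rewrite gez0_abs.
by rewrite -ltz_nat gez0_abs //; lia.
Qed.

Definition NC (R : realType) (h : R) n l :=
  #|[set A : {set cube_pt n.+1 l} | `[< C h (embed A) >] ]|.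

Lemma N_eq (R : realType) (h : R) n l : 0 <= h -> N_saddles h n.+1 l = NC h n l.
Proof.
move=> h0; rewrite /N_saddles /NC; apply: eq_card => A; rewrite !inE.
apply: asbool_equiv_eq; split; [exact: csaddle_C | exact: C_csaddle].
Qed.

Lemma NC0 (R : realType) (h : R) l : NC h 0 l = l.+1.
Proof.
rewrite /NC.
have -> : [set A : {set cube_pt 1 l} | `[< C h (embed A) >] ] =
          [set [set x] | x : cube_pt 1 l].
  apply/setP => A; rewrite inE; apply/asboolP/imsetP.
  - move=> [a Ha].
    have [x [Hx Ex]] : embed A a by apply/Ha.
    exists x => //; apply/setP => y; rewrite inE.
    apply/idP/eqP => [Hy|->//].
    by apply: toZ_inj; have := proj1 (Ha (toZ y)) (proj2 (embed_toZ _ _) Hy); rewrite Ex.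
  - move=> [x _ ->]; exists (toZ x) => z; split.
    + by move=> [c [/set1P -> ->]].
    + by move=> ->; apply/embed_toZ; rewrite inE.
rewrite card_imset; last exact: set1_inj.
by rewrite card_ffun !card_ord expn1.
Qed.

Definition Fmap n L l (x : ('I_n.+2 * bool * cube_pt n.+2 (l - L) * {set cube_pt n.+1 L})%type)
  : {set cube_pt n.+2 l} :=
  [set z | `[< canon (L%:Z) x.1.1.1 x.1.1.2 (toZ x.1.2) (embed x.2) (toZ z) >] ].

Lemma embedF n L l x : (L <= l)%N ->
  zset_eq (embed (@Fmap n L l x)) (canon (L%:Z) x.1.1.1 x.1.1.2 (toZ x.1.2) (embed x.2)).
Proof.
move=> hLl z; split.
- by move=> [c [Hc ->]]; move: Hc; rewrite inE => /asboolP.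
- move=> Hz.
  have [c Ec] : exists c : cube_pt n.+2 l, toZ c = z.
    apply: ofZ => i.
    have hL0 : (0 <= L%:Z)%R by lia.
    have := canon_box hL0 Hz i.
    rewrite /toZ ffunE; have := ltn_ord (x.1.2 i); lia.
  by exists c; split=> //; rewrite inE; apply/asboolP; rewrite Ec.
Qed.

Lemma NCS (R : realType) (h : R) n L l : 0 < h -> h < 1 -> ell h n.+2 = L%:Z ->
  (L <= l)%N -> NC h n.+1 l = (n.+2 * 2 * (l - L).+1 ^ n.+2 * NC h n L)%N.
Proof.
move=> h0 h1 hLe hLl.
have h0' : 0 <= h by apply: ltW.
have hs : forall k, ell h k.+1 + 2 <= ell h k.+2 by move=> k; apply: ell_step.
have hL2 : 2 <= L%:Z by rewrite -hLe; have := hs n; have := ell_ge0 n.+1 h0'; lia.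
have hL1 : 1 <= L%:Z by lia.
pose BS := [set B : {set cube_pt n.+1 L} | `[< C h (embed B) >] ].
pose D := setX (setX (setX [set: 'I_n.+2] [set: bool]) [set: cube_pt n.+2 (l - L)]) BS.
have cD : #|D| = (n.+2 * 2 * (l - L).+1 ^ n.+2 * #|BS|)%N.
  by rewrite !cardsX !cardsT card_ord card_bool card_ffun !card_ord.
rewrite /NC -/BS -cD.
have -> : [set A : {set cube_pt n.+2 l} | `[< C h (embed A) >] ] = (@Fmap n L l) @: D.
  apply/setP => A; rewrite inE; apply/asboolP/imsetP.
  - move=> /= [a [b [t [eta [Ceta [Hf Heq]]]]]].
    rewrite hLe in Hf Heq.
    have ne := C_nonempty h0' hs Ceta.
    have trange : forall i, 0 <= t i <= (l - L)%N%:Z.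
      move=> i.
      have [z1 [C1 E1]] := wit a b t hL1 ne Hf i (or_introl erefl).
      have [z2 [C2 E2]] := wit a b t hL1 ne Hf i (or_intror erefl).
      have [c1 [_ Ec1]] := proj2 (Heq z1) C1.
      have [c2 [_ Ec2]] := proj2 (Heq z2) C2.
      have B1 := ltn_ord (c1 i); have B2 := ltn_ord (c2 i).
      have F1 : z1 i = ((c1 i : nat) : int) by rewrite Ec1 ffunE.
      have F2 : z2 i = ((c2 i : nat) : int) by rewrite Ec2 ffunE.
      have G1 : z1 i = t i by apply/eqP; rewrite -subr_eq0; apply/eqP.
      have G2 : z2 i = t i + L%:Z by rewrite -E2 addrC subrK.
      rewrite G1 in F1; rewrite G2 in F2; rewrite F1; lia.
    have [tc Etc] := ofZ trange.
    pose B := [set y : cube_pt n.+1 L | `[< eta (toZ y) >] ].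
    have embB : zset_eq (embed B) eta.
      move=> w; split.
      + by move=> [y [Hy ->]]; move: Hy; rewrite inE => /asboolP.
      + move=> Hw; have [y Ey] := ofZ (Hf w Hw).
        by exists y; split=> //; rewrite inE; apply/asboolP; rewrite Ey.
    exists (a, b, tc, B).
      rewrite !inE /=; apply/asboolP; exact: C_eq Ceta (zeq_sym embB).
    apply/setP => c; rewrite inE /=.
    apply/idP/asboolP.
    + move/(embed_toZ A c)/Heq; rewrite Etc => Hc.
      by apply: (proj1 (canon_eq _ _ _ _ (zeq_sym embB) _)).
    + rewrite Etc => Hc; apply/(embed_toZ A c)/Heq.
      by apply: (proj1 (canon_eq _ _ _ _ embB _)).
  - move=> [[[[a b] tc] B] HD ->].
    move: HD; rewrite !inE /= => /asboolP CB.
    exists a, b, (toZ tc), (embed B); rewrite hLe; split=> //; split.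
      exact: embed_face.
    exact: embedF.
apply: card_in_imset.
move=> [[[a1 b1] t1] B1] [[[a2 b2] t2] B2].
rewrite !inE /= => /asboolP C1 /asboolP C2 E.
have E' : zset_eq (canon L%:Z a1 b1 (toZ t1) (embed B1)) (canon L%:Z a2 b2 (toZ t2) (embed B2)).
  apply: zeq_trans (zeq_sym (embedF (a1, b1, t1, B1) hLl)) _.
  by rewrite E; apply: embedF.
have hl0 := ell_ge0 n.+1 h0'.
have hl2 : ell h n.+1 + 2 <= L%:Z by rewrite -hLe.
have [ea eb et eB] := canon_inj hl0 hl2 (C_nonempty h0' hs C1) (C_nonempty h0' hs C2)
   (@embed_face _ _ B1) (@embed_face _ _ B2) (C_proj h0' C1) E'.
have -> : t1 = t2 by apply: toZ_inj.
have -> : B1 = B2.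
  apply/setP => y; apply/idP/idP.
  - by move/(embed_toZ B1 y)/eB/(embed_toZ B2 y).
  - by move/(embed_toZ B2 y)/eB/(embed_toZ B1 y).
by rewrite ea eb.
Qed.

Lemma PoszX (a b : nat) : Posz (a ^ b)%N = (Posz a) ^+ b.
Proof. by rewrite -natz natrX natz. Qed.

Lemma main_int (R : realType) (h : R) n : 0 < h -> h < 1 -> forall l : nat,
  ell h n.+1 <= l%:Z ->
  (NC h n l)%:Z = 2 ^+ n * (n.+1`!)%:Z * (l%:Z - ell h n.+1 + 1) ^+ n.+1 *
    \prod_(1 <= k < n.+1) (ell h k.+1 - ell h k + 1) ^+ k.
Proof.
move=> h0 h1; elim: n => [|n IH] l hl.
  rewrite NC0 ell1 big_geq // expr0 expr1 mul1r mulr1 /=.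
  have -> : ((1`!)%N : int) = 1 by [].
  lia.
have h0' : 0 <= h by apply: ltW.
have hg := ell_ge0 n.+2 h0'.
have hst := ell_step n h0 h1.
have [L hLe] : exists L : nat, ell h n.+2 = L%:Z.
  by exists (absz (ell h n.+2)); rewrite gez0_abs.
have hLl : (L <= l)%N by rewrite -lez_nat -hLe.
rewrite (NCS h0 h1 hLe hLl) -[LHS]natz natrM natrM natrM natrX !natz IH; last by rewrite -hLe; lia.
rewrite (@big_nat_recr _ _ _ n.+1 1) //= [in RHS]factS [in RHS]PoszM -hLe.
have -> : ((l - L).+1 : int) = l%:Z - ell h n.+2 + 1 by rewrite hLe; lia.
rewrite !exprS; ring.
Qed.

Theorem lemma5p6 (R : realType) (h : R) (d l : nat)
    (hd : (1 <= d)%N) (h0 : 0 < h) (h1 : h < 1)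
    (hint : forall k : nat, (1 <= k <= d.-1)%N -> ~ (k%:R *+ 2 / h \is a Num.int))
    (hl : ell h d <= l%:Z) :
  (N_saddles h d l)%:Z =
    2 ^+ d.-1 * (d`!)%:Z * (l%:Z - ell h d + 1) ^+ d *
    \prod_(1 <= k < d) (ell h k.+1 - ell h k + 1) ^+ k.
Proof.
case: d hd hint hl => [//|n] _ _ hl.
rewrite N_eq; last exact: ltW.
exact: main_int.
Qed.
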